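(* For $n\ge1$ let $\mathcal{A}_n(\lambda)=\det(\lambda I_n-N_n)$, where $N_n$ is the $n\times n$ matrix with $(N_n)_{j,i}=1$ if $i\ge j-1$ and $0$ otherwise, and set $\mathcal{A}_0(\lambda)=1$. Then $\mathcal{A}_1(\lambda)=\lambda-1$ and $$\mathcal{A}_n(\lambda)=\lambda\,\mathcal{A}_{n-1}(\lambda)-\lambda\,\mathcal{A}_{n-2}(\lambda)\qquad(n\ge2).$$ *)

(* Defs.v *)
From mathcomp Require Import all_boot all_algebra.
Set Implicit Arguments. Unset Strict Implicit. Unset Printing Implicit Defensive.
Import GRing.Theory.
Local Open Scope ring_scope.

(* N_n : n x n matrix with (N_n)_{j,i} = 1 if i >= j - 1 (i.e. j <= i + 1), else 0.
   Row index j, column index i (0-based; the condition is shift-invariant). *)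
Definition Nmx (R : nzRingType) (n : nat) : 'M[R]_n :=
  \matrix_(j < n, i < n) (if (j <= i.+1)%N then 1 else 0).

(* A_n(lambda) = det(lambda I_n - N_n) = char_poly N_n for n >= 1, A_0 = 1.
   Note char_poly of a 0x0 matrix is already 1. *)
Definition Apoly (R : comNzRingType) (n : nat) : {poly R} :=
  if n is 0 then 1 else char_poly (Nmx R n).

(* Main.v *)
Require Import Defs.
From mathcomp Require Import all_boot all_algebra.
Set Implicit Arguments. Unset Strict Implicit. Unset Printing Implicit Defensive.
Import GRing.Theory.
Local Open Scope ring_scope.

Section S.
Variable R : comNzRingType.
Definition P n := locked (char_poly_mx (Nmx R n)).

Lemma PE n (i j : 'I_n) : P n i j = 'X *+ (i == j) - ((i <= j.+1)%N)%:R.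
Proof.
rewrite /P -lock /char_poly_mx /Nmx !mxE; congr (_ - _).
by case: ifP => _; rewrite ?polyC1 ?polyC0.
Qed.

Lemma ApolyE n : Apoly R n = \det (P n).
Proof. by case: n => [|n] //=; rewrite /P -lock ?det_mx00. Qed.

Lemma P_shift m : row' 0 (col' 0 (P m.+1)) = P m.
Proof. apply/matrixP => i j; rewrite !mxE !PE /=. by []. Qed.

Lemma rec m : \det (P m.+2) = 'X * \det (P m.+1) - 'X * \det (P m).
Proof.
pose E : 'M[{poly R}]_(m.+2) := 1 - delta_mx 0 1.
have dE : \det E = 1.
  rewrite -det_tr det_trig; last first.
    apply/is_trig_mxP => i j lt; rewrite !mxE.
    have /negbTE -> : j != i by apply/eqP => e; rewrite e ltnn in lt.
    have /negbTE -> : j != 0 by apply/eqP => e; rewrite e in lt.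
    by rewrite subr0.
  rewrite big1 // => i _; rewrite !mxE eqxx.
  by case: i => [[|[|k]] Hk]; rewrite /= ?subr0.
set A := \matrix_(i, j) (P m.+2 i j - (i == 0)%:R * P m.+2 1 j).
have EM : E *m P m.+2 = A.
  apply/matrixP => i j; rewrite mulmxBl mul1mx !mxE; congr (_ - _).
  rewrite (bigD1 1) //= big1 ?addr0; last first.
    by move=> k /negbTE k1; rewrite !mxE k1 andbF mul0r.
  by rewrite !mxE eqxx andbT.
have := det_mulmx E (P m.+2); rewrite dE mul1r => <-; rewrite EM.
rewrite (expand_det_row _ 0) big_ord_recl big_ord_recl big1 ?addr0; last first.
  by move=> i _; rewrite !mxE !PE /= mulr0n mul1r subrr mul0r.
have A00 : row' 0 (col' 0 A) = P m.+1.
  apply/matrixP => i j; rewrite !mxE !PE /= mul0r subr0. by [].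
have B00 : row' 0 (col' 0 (row' 0 (col' 1 A))) = P m.
  apply/matrixP => i j; rewrite !mxE !PE /= mul0r subr0. by [].
have dB : \det (row' 0 (col' 1 A)) = - \det (P m).
  rewrite (expand_det_col _ 0) big_ord_recl big1 ?addr0; last first.
    by move=> i _; rewrite !mxE !PE /= mul0r subr0 mulr0n sub0r oppr0 mul0r.
  rewrite /cofactor B00 !mxE !PE /= mul0r subr0 expr0 mul1r mulr0n sub0r mulN1r.
  by [].
rewrite /cofactor A00 dB !mxE !PE /=.
rewrite /= expr0 expr1 !mul1r mulr0n mulr1n !sub0r opprK mulN1r.
by rewrite subrK opprK opprB addrA addNr add0r mulNr.
Qed.
End S.

Theorem lemma3 (R : comNzRingType) :
  Apoly R 1 = 'X - 1 /\
  (forall n : nat, (2 <= n)%N ->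
     Apoly R n = 'X * Apoly R n.-1 - 'X * Apoly R n.-2).
Proof.
split.
  rewrite ApolyE (expand_det_row _ 0) big_ord1 /cofactor det_mx00 PE /=.
  by rewrite expr0 !mulr1.
case=> [|[|m]] // _; rewrite !ApolyE /=; exact: rec.
Qed.
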